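(* Let $\lambda=(\lambda_1,\lambda_2,\lambda_3)\in\mathbb C^3$ and let $\pi$ be a representation of $\mathrm U_q(\mathfrak{gl}_3)$ on a space $W$ generated by a vector $v_0$ with $q^{\nu G_i}v_0=q^{\nu\lambda_i}v_0$ for all $\nu\in\mathbb C$, $i=1,2,3$, and $E_1v_0=E_2v_0=0$. Then $C^{(1)},C^{(2)},C^{(3)}$ act on $W$ as scalars and, as polynomials in a formal variable $\zeta$, $$\pi\bigl(1-C^{(1)}\zeta-C^{(2)}\zeta^2-C^{(3)}\zeta^3\bigr)=(1-q^{-2(\lambda_1+1)}\zeta)(1-q^{-2\lambda_2}\zeta)(1-q^{-2(\lambda_3-1)}\zeta).$$ Consequently, if $F_k$ ($k\ge1$) are defined by $\sum_{k\ge1}F_k\zeta^k/k=-\log(1-C^{(1)}\zeta-C^{(2)}\zeta^2-C^{(3)}\zeta^3)$ and $F(\zeta)=\sum_{k\ge1}\frac{F_k}{q^{2k}+1+q^{-2k}}\frac{\zeta^k}{k}$ (assuming $q^{2k}+1+q^{-2k}\ne0$ for all $k\ge1$), then $\pi(F_k)=q^{-2(\lambda_1+1)k}+q^{-2\lambda_2k}+q^{-2(\lambda_3-1)k}$ and $$\pi(F(\zeta))=f_3(q^{-2(\lambda_1+1)}\zeta)+f_3(q^{-2\lambda_2}\zeta)+f_3(q^{-2(\lambda_3-1)}\zeta),\qquad f_3(\zeta)=\sum_{k\ge1}\frac{1}{q^{2k}+1+q^{-2k}}\frac{\zeta^k}{k}.$$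
   Context: Setting: $\hbar\in\mathbb C$, $q=e^\hbar$, $q^2\neq1$, $\kappa_q=q-q^{-1}$, $[\nu]_q=(q^\nu-q^{-\nu})/\kappa_q$. Let $\mathfrak g=\mathbb CG_1\oplus\mathbb CG_2\oplus\mathbb CG_3$ and define linear forms $\alpha_1,\alpha_2$ on $\mathfrak g$ by $\alpha_1(G_1)=1,\alpha_1(G_2)=-1,\alpha_1(G_3)=0$, $\alpha_2(G_1)=0,\alpha_2(G_2)=1,\alpha_2(G_3)=-1$; put $H_1=G_1-G_2$, $H_2=G_2-G_3$. $\mathrm U_q(\mathfrak{gl}_3)$ is the unital associative $\mathbb C$-algebra generated by $E_1,E_2,F_1,F_2$ and symbols $q^X$, $X\in\mathfrak g$, with relations $q^0=1$, $q^{X_1}q^{X_2}=q^{X_1+X_2}$, $q^XE_iq^{-X}=q^{\alpha_i(X)}E_i$, $q^XF_iq^{-X}=q^{-\alpha_i(X)}F_i$, $[E_i,F_j]=\delta_{ij}(q^{H_i}-q^{-H_i})/\kappa_q$, and for $i\ne j$ the $q$-Serre relations $E_i^2E_j-[2]_qE_iE_jE_i+E_jE_i^2=0$, $F_i^2F_j-[2]_qF_iF_jF_i+F_jF_i^2=0$. For $\nu\in\mathbb C$ one writes $q^{X+\nu}=q^\nu q^X$. Further $E_3=E_1E_2-q^{-1}E_2E_1$, $F_3=F_2F_1-qF_1F_2$, and $C^{(1)}=q^{-2G_1-2}+q^{-2G_2}+q^{-2G_3+2}+\kappa_q^2F_1E_1q^{-G_1-G_2-1}+\kappa_q^2F_2E_2q^{-G_2-G_3+1}+\kappa_q^2F_3E_3q^{-G_1-G_3+1}-\kappa_q^3F_3E_1E_2q^{-G_1-G_3}$,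 $C^{(2)}=-q^{-2G_1-2G_2-2}-q^{-2G_1-2G_3}-q^{-2G_2-2G_3+2}-\kappa_q^2F_1E_1q^{-G_1-G_2-2G_3+1}-\kappa_q^2F_2E_2q^{-2G_1-G_2-G_3-1}-\kappa_q^2F_3E_3q^{-G_1-2G_2-G_3+1}-\kappa_q^3F_1F_2E_3q^{-G_1-2G_2-G_3+1}$, $C^{(3)}=q^{-2(G_1+G_2+G_3)}$. *)

(* Defs.v *)
From HB Require Import structures.
From mathcomp Require Import all_boot all_order all_algebra.
Set Implicit Arguments. Unset Strict Implicit. Unset Printing Implicit Defensive.
Import Order.TTheory GRing.Theory Num.Theory.
Local Open Scope ring_scope.

Section Uq.
Variables (K : numClosedFieldType) (ex : K -> K) (hbar : K).

(* q^nu := e^(hbar nu); ex plays the role of the complex exponential *)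
Definition qpow (nu : K) : K := ex (hbar * nu).
Definition qq : K := qpow 1.
Definition kappa : K := qq - qq^-1.
Definition qint (nu : K) : K := (qpow nu - qpow (- nu)) / kappa.

Variable W : lmodType K.

Definition lin (f : W -> W) := forall (a : K) (u v : W), f (a *: u + v) = a *: f u + f v.

(* A representation pi of U_q(gl_3) on W: images of the generators E1,E2,F1,F2
   and of q^X for X = x1 G1 + x2 G2 + x3 G3 (written Kq x1 x2 x3), subject to
   the defining relations. *)
Record rep := Rep {
  E1 : W -> W; E2 : W -> W; F1 : W -> W; F2 : W -> W;
  Kq : K -> K -> K -> W -> W;
  lin_E1 : lin E1; lin_E2 : lin E2; lin_F1 : lin F1; lin_F2 : lin F2;
  lin_Kq : forall x1 x2 x3, lin (Kq x1 x2 x3);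
  Kq0 : forall w, Kq 0 0 0 w = w;
  KqD : forall x1 x2 x3 y1 y2 y3 w,
      Kq x1 x2 x3 (Kq y1 y2 y3 w) = Kq (x1 + y1) (x2 + y2) (x3 + y3) w;
  KqE1 : forall x1 x2 x3 w,
      Kq x1 x2 x3 (E1 (Kq (- x1) (- x2) (- x3) w)) = qpow (x1 - x2) *: E1 w;
  KqE2 : forall x1 x2 x3 w,
      Kq x1 x2 x3 (E2 (Kq (- x1) (- x2) (- x3) w)) = qpow (x2 - x3) *: E2 w;
  KqF1 : forall x1 x2 x3 w,
      Kq x1 x2 x3 (F1 (Kq (- x1) (- x2) (- x3) w)) = qpow (- (x1 - x2)) *: F1 w;
  KqF2 : forall x1 x2 x3 w,
      Kq x1 x2 x3 (F2 (Kq (- x1) (- x2) (- x3) w)) = qpow (- (x2 - x3)) *: F2 w;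
  EF11 : forall w, E1 (F1 w) - F1 (E1 w) = kappa^-1 *: (Kq 1 (-1) 0 w - Kq (-1) 1 0 w);
  EF22 : forall w, E2 (F2 w) - F2 (E2 w) = kappa^-1 *: (Kq 0 1 (-1) w - Kq 0 (-1) 1 w);
  EF12 : forall w, E1 (F2 w) - F2 (E1 w) = 0;
  EF21 : forall w, E2 (F1 w) - F1 (E2 w) = 0;
  SerreE12 : forall w, E1 (E1 (E2 w)) - qint 2 *: E1 (E2 (E1 w)) + E2 (E1 (E1 w)) = 0;
  SerreE21 : forall w, E2 (E2 (E1 w)) - qint 2 *: E2 (E1 (E2 w)) + E1 (E2 (E2 w)) = 0;
  SerreF12 : forall w, F1 (F1 (F2 w)) - qint 2 *: F1 (F2 (F1 w)) + F2 (F1 (F1 w)) = 0;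
  SerreF21 : forall w, F2 (F2 (F1 w)) - qint 2 *: F2 (F1 (F2 w)) + F1 (F2 (F2 w)) = 0
}.

Variable r : rep.

Definition E3 (w : W) : W := E1 r (E2 r w) - qq^-1 *: E2 r (E1 r w).
Definition F3 (w : W) : W := F2 r (F1 r w) - qq *: F1 r (F2 r w).

(* pi(C^(1)), pi(C^(2)), pi(C^(3)); q^(X+nu) = q^nu q^X *)
Definition C1 (w : W) : W :=
  qpow (-2) *: Kq r (-2) 0 0 w + Kq r 0 (-2) 0 w + qpow 2 *: Kq r 0 0 (-2) w
  + kappa ^+ 2 *: F1 r (E1 r (qpow (-1) *: Kq r (-1) (-1) 0 w))
  + kappa ^+ 2 *: F2 r (E2 r (qpow 1 *: Kq r 0 (-1) (-1) w))
  + kappa ^+ 2 *: F3 (E3 (qpow 1 *: Kq r (-1) 0 (-1) w))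
  - kappa ^+ 3 *: F3 (E1 r (E2 r (Kq r (-1) 0 (-1) w))).

Definition C2 (w : W) : W :=
  - (qpow (-2) *: Kq r (-2) (-2) 0 w) - Kq r (-2) 0 (-2) w
  - qpow 2 *: Kq r 0 (-2) (-2) w
  - kappa ^+ 2 *: F1 r (E1 r (qpow 1 *: Kq r (-1) (-1) (-2) w))
  - kappa ^+ 2 *: F2 r (E2 r (qpow (-1) *: Kq r (-2) (-1) (-1) w))
  - kappa ^+ 2 *: F3 (E3 (qpow 1 *: Kq r (-1) (-2) (-1) w))
  - kappa ^+ 3 *: F1 r (F2 r (E3 (qpow 1 *: Kq r (-1) (-2) (-1) w))).

Definition C3 (w : W) : W := Kq r (-2) (-2) (-2) w.

Definition Cvec (i : 'I_3) : W -> W :=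
  if val i == 0%N then C1 else if val i == 1%N then C2 else C3.

Definition opprod (s : seq 'I_3) : W -> W := foldr (fun i f => Cvec i \o f) id s.

(* coefficient of zeta^k in x^m, x = C1 zeta + C2 zeta^2 + C3 zeta^3 *)
Definition powcoef (m k : nat) (w : W) : W :=
  \sum_(s : m.-tuple 'I_3 | sumn [seq (nat_of_ord i).+1 | i <- s] == k) opprod s w.

(* coefficient of zeta^k in -log(1 - x) = sum_(m>=1) x^m/m
   (terms with m > k vanish since x has no constant term) *)
Definition logcoef (k : nat) (w : W) : W :=
  \sum_(1 <= m < k.+1) (m%:R)^-1 *: powcoef m k w.

(* pi(F_k), where sum_k F_k zeta^k / k = -log(1 - x) *)
Definition Fk (k : nat) (w : W) : W := k%:R *: logcoef k w.

End Uq.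

(* W is generated by v0 as a U_q(gl_3)-module *)
Inductive gen (K : numClosedFieldType) (ex : K -> K) (hbar : K) (W : lmodType K)
    (r : rep ex hbar W) (v0 : W) : W -> Prop :=
| gen_v0 : gen r v0 v0
| gen_E1 u : gen r v0 u -> gen r v0 (E1 r u)
| gen_E2 u : gen r v0 u -> gen r v0 (E2 r u)
| gen_F1 u : gen r v0 u -> gen r v0 (F1 r u)
| gen_F2 u : gen r v0 u -> gen r v0 (F2 r u)
| gen_Kq x1 x2 x3 u : gen r v0 u -> gen r v0 (Kq r x1 x2 x3 u)
| gen_lin (a : K) u v : gen r v0 u -> gen r v0 v -> gen r v0 (a *: u + v).

(* Main.v *)
Require Import Defs.
From HB Require Import structures.
From mathcomp Require Import all_boot all_order all_algebra.
From mathcomp Require Import ring.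
Import Order.TTheory GRing.Theory Num.Theory.
Local Open Scope ring_scope.

Section Norm.
Variables (K : nzRingType) (W : lmodType K).

Inductive wexp := WA (n : nat) | W0 | WD (a b : wexp) | WN (a : wexp) | WS (c : K) (a : wexp).

Fixpoint wint (env : seq W) (e : wexp) : W :=
  match e with
  | WA n => nth 0 env n | W0 => 0 | WD a b => wint env a + wint env b
  | WN a => - wint env a | WS c a => c *: wint env a end.

Fixpoint wco (e : wexp) (i : nat) : K :=
  match e with
  | WA n => if eqn n i then 1 else 0 | W0 => 0 | WD a b => wco a i + wco b i
  | WN a => - wco a i | WS c a => c * wco a i end.

Fixpoint wbd (e : wexp) : nat :=
  match e with
  | WA n => n.+1 | W0 => 0 | WD a b => maxn (wbd a) (wbd b)
  | WN a => wbd a | WS c a => wbd a end.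

Lemma wint_sum env e N : (wbd e <= N)%N ->
  wint env e = \sum_(i < N) wco e i *: nth 0 env i.
Proof.
elim: e => [n|||a IHa|c a IHa] /=.
- move=> hn; rewrite (bigD1 (Ordinal hn)) //= big1 ?addr0.
    by rewrite (_ : eqn n n = true) ?scale1r //; apply/eqnP.
  move=> i hi; rewrite (_ : eqn n i = false) ?scale0r //.
  apply/negbTE/eqnP => eni; move: hi; rewrite -val_eqE /= eni eqxx //.
- by move=> _; rewrite big1 // => i _; rewrite scale0r.
- move=> a IHa b IHb; rewrite geq_max => /andP[ha hb].
  by rewrite IHa // IHb // -big_split /=; apply: eq_bigr => i _; rewrite scalerDl.
- by move=> h; rewrite IHa // -sumrN; apply: eq_bigr => i _; rewrite scaleNr.
- by move=> h; rewrite IHa // scaler_sumr; apply: eq_bigr => i _; rewrite scalerA.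
Qed.

Lemma wnorm env e1 e2 : (forall i, wco e1 i = wco e2 i) -> wint env e1 = wint env e2.
Proof.
move=> h; rewrite (@wint_sum env e1 (maxn (wbd e1) (wbd e2))) ?leq_maxl //.
rewrite (@wint_sum env e2 (maxn (wbd e1) (wbd e2))) ?leq_maxr //.
by apply: eq_bigr => i _; rewrite h.
Qed.
End Norm.

Ltac convb x y := match goal with
  | _ => let _ := match goal with _ => unify x y end in constr:(true)
  | _ => constr:(false) end.
Ltac wmem x l := lazymatch l with
  | nil => constr:(false)
  | cons ?y ?l' => let b := convb x y in lazymatch b with true => constr:(true) | false => wmem x l' end end.
Ltac wlookup x l := lazymatch l with
  | cons ?y ?l' => let b := convb x y in lazymatch b with true => constr:(0%nat)
        | false => let n := wlookup x l' in constr:(S n) end end.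
Ltac watoms t l := lazymatch t with
  | @GRing.add _ ?a ?b => let l1 := watoms a l in watoms b l1
  | @GRing.opp _ ?a => watoms a l
  | @GRing.scale _ _ _ ?a => watoms a l
  | @GRing.zero _ => l
  | _ => let m := wmem t l in lazymatch m with true => l | false => constr:(cons t l) end end.
Ltac wreify K W t l := lazymatch t with
  | @GRing.add _ ?a ?b => let x := wreify K W a l in let y := wreify K W b l in constr:(@WD K x y)
  | @GRing.opp _ ?a => let x := wreify K W a l in constr:(@WN K x)
  | @GRing.scale _ _ ?c ?a => let x := wreify K W a l in constr:(@WS K c x)
  | @GRing.zero _ => constr:(@W0 K)
  | _ => let n := wlookup t l in constr:(@WA K n) end.
Ltac wlen l := lazymatch l with nil => constr:(0%nat) | cons _ ?l' => let n := wlen l' in constr:(S n) end.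

Ltac wcases i l tac := lazymatch l with
  | nil => lazy beta iota delta [wco eqn]; tac
  | cons _ ?l' => destruct i as [|i]; [lazy beta iota delta [wco eqn]; tac | wcases i l' tac] end.

Ltac wsolve K W tac :=
  lazymatch goal with |- ?L = ?R =>
    let l := watoms L (@nil W) in let l := watoms R l in
    let e1 := wreify K W L l in let e2 := wreify K W R l in
    change (@wint K W l e1 = @wint K W l e2); apply: wnorm;
    let i := fresh "i" in intro i;
    wcases i l tac
  end.


Section Comb.
Variables (K : numFieldType) (c0 c1 c2 : K).
Definition cv (i : 'I_3) : K := if val i == 0%N then c0 else if val i == 1%N then c1 else c2.
Definition wt (s : seq 'I_3) := sumn [seq (nat_of_ord i).+1 | i <- s].
Definition T m k := \sum_(s : m.-tuple 'I_3 | wt s == k) \prod_(i <- s) cv i.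
Definition xp : {poly K} := c0 *: 'X^1 + c1 *: 'X^2 + c2 *: 'X^3.

Lemma tuple_sumS m (F : m.+1.-tuple 'I_3 -> K) :
  \sum_t F t = \sum_(i : 'I_3) \sum_(t : m.-tuple 'I_3) F (cons_tuple i t).
Proof.
rewrite pair_big /= (reindex (fun p : 'I_3 * m.-tuple 'I_3 => cons_tuple p.1 p.2)) //.
exists (fun t => (thead t, [tuple of behead t])) => [[i t] _|t _] /=.
  by congr pair; apply: val_inj.
by rewrite [RHS]tuple_eta; apply: val_inj.
Qed.

Lemma coef_xpM (y : {poly K}) k : (xp * y)`_k =
  c0 * (if (k < 1)%N then 0 else y`_(k - 1)) + c1 * (if (k < 2)%N then 0 else y`_(k - 2))
  + c2 * (if (k < 3)%N then 0 else y`_(k - 3)).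
Proof. by rewrite /xp !mulrDl -!scalerAl !coefD !coefZ !coefXnM. Qed.

Lemma T_coef m k : T m k = (xp ^+ m)`_k.
Proof.
elim: m k => [|m IH] k.
  rewrite /T expr0 coef1; case: k => [|k].
    by rewrite (big_pred1 [tuple]) ?big_nil // => t; rewrite [t]tuple0 /= eqxx.
  by rewrite big_pred0 // => t; rewrite [t]tuple0.
rewrite /T big_mkcond /= tuple_sumS exprS coef_xpM.
rewrite !big_ord_recl big_ord0 addr0.
have H (i : 'I_3) : \sum_(t : m.-tuple 'I_3)
    (if wt (cons_tuple i t) == k then \prod_(j <- cons_tuple i t) cv j else 0)
  = cv i * (if (k < i.+1)%N then 0 else T m (k - i.+1)%N).
  rewrite /T; case: ltnP => hk.
    rewrite mulr0 big1 // => t _; rewrite /wt /= ifF //; apply/negbTE.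
    by rewrite neq_ltn; apply/orP; right; apply: leq_trans hk _; rewrite leq_addr.
  rewrite mulr_sumr [RHS]big_mkcond /=; apply: eq_bigr => t _.
  rewrite /wt /= big_cons.
  have -> : (sumn [seq (nat_of_ord j).+1 | j <- t] == (k - i.+1)%N) =
     ((i.+1 + sumn [seq (nat_of_ord j).+1 | j <- t])%N == k).
    by rewrite -(eqn_add2l i.+1) subnKC.
  by case: ifP.
rewrite !H !IH /cv /=.
by rewrite addrA.
Qed.

Lemma coef_xpXn (q : {poly K}) N j : (j < N)%N -> (q * xp ^+ N)`_j = 0.
Proof.
move=> hj.
have -> : xp = 'X * (c0%:P + c1 *: 'X + c2 *: 'X^2).
  rewrite /xp !mulrDr -!scalerAr (mulrC 'X) mul_polyC -exprS -expr2.
  by rewrite expr1.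
by rewrite exprMn mulrCA coefXnM hj.
Qed.

Lemma coef_dxp j : (xp^`())`_j = c0 * (j == 0)%:R + c1 * (j == 1)%:R *+ 2 + c2 * (j == 2)%:R *+ 3.
Proof.
rewrite /xp !derivD !derivZ !derivXn !coefD !coefZ !coefMn !coefXn /=.
by ring.
Qed.

Lemma step1 m k : (0 < m)%N -> (0 < k)%N ->
  k%:R * (m%:R^-1 * T m k) = (xp^`() * xp ^+ m.-1)`_k.-1.
Proof.
move=> hm hk; have := coef_deriv (xp ^+ m) k.-1.
rewrite deriv_exp coefMn prednK // -T_coef => e.
have hm0 : (m%:R : K) != 0 by rewrite pnatr_eq0 -lt0n.
apply: (mulIf hm0); rewrite [RHS]mulr_natr e -mulr_natr.
by field.
Qed.

Definition G N := xp^`() * \sum_(j < N) xp ^+ j.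

Lemma G_rec N j : (j < N)%N -> (G N)`_j = (xp^`())`_j + (xp * G N)`_j.
Proof.
move=> hj.
have e : \sum_(i < N) xp ^+ i = 1 - xp ^+ N + xp * \sum_(i < N) xp ^+ i.
  have h := subrX1 xp N.
  have -> : 1 - xp ^+ N = -(xp ^+ N - 1) by rewrite opprB.
  by rewrite h; ring.
rewrite /G {1}e !mulrDr mulr1 mulrN !coefD coefN coef_xpXn // oppr0 addr0.
by rewrite mulrCA.
Qed.

Variables (a b c : K).
Hypotheses (h0 : c0 = a + b + c) (h1 : c1 = - (a * b + b * c + c * a)) (h2 : c2 = a * b * c).
Definition ps n := a ^+ n + b ^+ n + c ^+ n.

Lemma G_coef j N : (j < N)%N -> (G N)`_j = ps j.+1.
Proof.
elim/ltn_ind: j N => j IH N hjN.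
rewrite G_rec // coef_xpM coef_dxp.
case: j IH hjN => [|[|[|n]]] IH hjN /=.
- by rewrite /ps h0 !expr1; ring.
- rewrite subnn IH //; last exact: ltnW.
  by rewrite /ps h0 h1; ring.
- have l1 : (1 < N)%N by apply: ltn_trans hjN.
  have l0 : (0 < N)%N by apply: ltn_trans l1.
  rewrite !IH //.
  by rewrite /ps h0 h1 h2; ring.
- have l1 : (n.+2 < N)%N by apply: ltn_trans hjN.
  have l2 : (n.+1 < N)%N by apply: ltn_trans l1.
  have l3 : (n < N)%N by apply: ltn_trans l2.
  rewrite !subSS !subn0 !IH //; last by rewrite ltnS leqW // leqW.
  rewrite /ps h0 h1 h2 !exprS; ring.
Qed.

Lemma logsum k : (0 < k)%N ->
  k%:R * \sum_(1 <= m < k.+1) m%:R^-1 * T m k = ps k.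
Proof.
move=> hk; rewrite mulr_sumr (eq_big_nat _ _ (F2 := fun m => (xp^`() * xp ^+ m.-1)`_k.-1)); last first.
  by move=> m /andP[hm _]; exact: step1 hm hk.
rewrite big_add1 /= big_mkord -coef_sum -mulr_sumr.
by rewrite -/(G k) G_coef ?prednK // ltn_predL.
Qed.
End Comb.


Section Main.
Variables (K : numClosedFieldType) (ex : K -> K) (hbar : K).
Hypotheses (ex0 : ex 0 = 1) (exD : forall a b, ex (a + b) = ex a * ex b).
Hypothesis hq2 : qq ex hbar ^+ 2 != 1.
Variables (W : lmodType K) (r : rep ex hbar W).

Local Notation qpow := (qpow ex hbar).
Local Notation qq := (qq ex hbar).
Local Notation kappa := (kappa ex hbar).
Local Notation E1 := (E1 r). Local Notation E2 := (E2 r).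
Local Notation F1 := (F1 r). Local Notation F2 := (F2 r).
Local Notation Kq := (Kq r).

Lemma qpowD a b : qpow (a + b) = qpow a * qpow b.
Proof. by rewrite /Defs.qpow mulrDr exD. Qed.
Lemma qpow0 : qpow 0 = 1.
Proof. by rewrite /Defs.qpow mulr0 ex0. Qed.
Lemma qpow_neq0 a : qpow a != 0.
Proof.
apply/negP => /eqP h; have := qpowD a (- a); rewrite subrr qpow0 h mul0r.
by move/eqP; rewrite oner_eq0.
Qed.
Lemma qpowN a : qpow (- a) = (qpow a)^-1.
Proof.
apply/esym/eqP; rewrite -[_ == _](inj_eq (mulfI (qpow_neq0 a))) -qpowD subrr qpow0.
by rewrite mulfV ?qpow_neq0.
Qed.
Lemma qpowB a b : qpow (a - b) = qpow a / qpow b.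
Proof. by rewrite qpowD qpowN. Qed.
Lemma qpow1 : qpow 1 = qq. Proof. by []. Qed.
Lemma qpow2 : qpow 2 = qq ^+ 2.
Proof. by rewrite -[2]/(1 + 1) qpowD expr2. Qed.
Lemma qq_neq0 : qq != 0. Proof. exact: qpow_neq0. Qed.
Lemma qq2_neq0 : qq ^+ 2 - 1 != 0. Proof. by rewrite subr_eq0. Qed.

Lemma linD f : @lin K W f -> forall u v, f (u + v) = f u + f v.
Proof. by move=> h u v; have := h 1 u v; rewrite !scale1r. Qed.
Arguments linD {f}.
Lemma lin0 f : @lin K W f -> f 0 = 0.
Proof. by move=> h; have e := linD h 0 0; rewrite addr0 in e; apply: (addIr (f 0)); rewrite add0r -e. Qed.
Arguments lin0 {f}.
Lemma linZ f : @lin K W f -> forall a u, f (a *: u) = a *: f u.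
Proof. by move=> h a u; have := h a u 0; rewrite !addr0 lin0 // addr0. Qed.
Arguments linZ {f}.
Lemma linN f : @lin K W f -> forall u, f (- u) = - f u.
Proof. by move=> h u; rewrite -scaleN1r linZ // scaleN1r. Qed.
Arguments linN {f}.

Definition E1D := linD (lin_E1 r). Definition E1Z := linZ (lin_E1 r).
Definition E1N := linN (lin_E1 r). Definition E10 := lin0 (lin_E1 r).
Definition E2D := linD (lin_E2 r). Definition E2Z := linZ (lin_E2 r).
Definition E2N := linN (lin_E2 r). Definition E20 := lin0 (lin_E2 r).
Definition F1D := linD (lin_F1 r). Definition F1Z := linZ (lin_F1 r).
Definition F1N := linN (lin_F1 r). Definition F10 := lin0 (lin_F1 r).
Definition F2D := linD (lin_F2 r). Definition F2Z := linZ (lin_F2 r).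
Definition F2N := linN (lin_F2 r). Definition F20 := lin0 (lin_F2 r).
Lemma KqDl x1 x2 x3 u v : Kq x1 x2 x3 (u + v) = Kq x1 x2 x3 u + Kq x1 x2 x3 v.
Proof. exact: (linD (lin_Kq r x1 x2 x3) u v). Qed.
Lemma KqZ x1 x2 x3 a u : Kq x1 x2 x3 (a *: u) = a *: Kq x1 x2 x3 u.
Proof. exact: (linZ (lin_Kq r x1 x2 x3) a u). Qed.
Lemma KqN x1 x2 x3 u : Kq x1 x2 x3 (- u) = - Kq x1 x2 x3 u.
Proof. exact: (linN (lin_Kq r x1 x2 x3) u). Qed.
Lemma Kq00 x1 x2 x3 : Kq x1 x2 x3 0 = 0.
Proof. exact: lin0 (lin_Kq r x1 x2 x3). Qed.

Lemma KqK x1 x2 x3 w : Kq (- x1) (- x2) (- x3) (Kq x1 x2 x3 w) = w.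
Proof. by rewrite KqD !addNr Kq0. Qed.
Lemma KqF1c x1 x2 x3 w : Kq x1 x2 x3 (F1 w) = qpow (x2 - x1) *: F1 (Kq x1 x2 x3 w).
Proof. by rewrite -{1}(KqK x1 x2 x3 w) KqF1 opprB. Qed.
Lemma KqF2c x1 x2 x3 w : Kq x1 x2 x3 (F2 w) = qpow (x3 - x2) *: F2 (Kq x1 x2 x3 w).
Proof. by rewrite -{1}(KqK x1 x2 x3 w) KqF2 opprB. Qed.
Lemma KqE1c x1 x2 x3 w : Kq x1 x2 x3 (E1 w) = qpow (x1 - x2) *: E1 (Kq x1 x2 x3 w).
Proof. by rewrite -{1}(KqK x1 x2 x3 w) KqE1. Qed.
Lemma KqE2c x1 x2 x3 w : Kq x1 x2 x3 (E2 w) = qpow (x2 - x3) *: E2 (Kq x1 x2 x3 w).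
Proof. by rewrite -{1}(KqK x1 x2 x3 w) KqE2. Qed.

Lemma EF11c w : E1 (F1 w) = F1 (E1 w) + kappa^-1 *: (Kq 1 (-1) 0 w - Kq (-1) 1 0 w).
Proof. by rewrite -EF11 addrC subrK. Qed.
Lemma EF22c w : E2 (F2 w) = F2 (E2 w) + kappa^-1 *: (Kq 0 1 (-1) w - Kq 0 (-1) 1 w).
Proof. by rewrite -EF22 addrC subrK. Qed.
Lemma EF12c w : E1 (F2 w) = F2 (E1 w).
Proof. by apply/eqP; rewrite -subr_eq0 EF12. Qed.
Lemma EF21c w : E2 (F1 w) = F1 (E2 w).
Proof. by apply/eqP; rewrite -subr_eq0 EF21. Qed.
Lemma SF12c w : F2 (F1 (F1 w)) = qint ex hbar 2 *: F1 (F2 (F1 w)) - F1 (F1 (F2 w)).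
Proof. by have := SerreF12 r w; move/eqP; rewrite addrC addr_eq0 opprB => /eqP. Qed.
Lemma SF21c w : F2 (F2 (F1 w)) = qint ex hbar 2 *: F2 (F1 (F2 w)) - F1 (F2 (F2 w)).
Proof. by have := SerreF21 r w; move/eqP; rewrite -addrA addr_eq0 opprD opprK => /eqP. Qed.

Lemma n1 : (1 : K) + -2 = -1. Proof. by rewrite -[2]/(1 + 1) opprD addrA subrr add0r. Qed.
Lemma n2 : (-1 : K) + -1 = -2. Proof. by rewrite -opprD. Qed.
Lemma n3 : (-1 : K) + -2 = -3. Proof. by rewrite -opprD. Qed.

Ltac push := repeat progress rewrite ?E1D ?E1Z ?E1N ?E10 ?E2D ?E2Z ?E2N ?E20
  ?F1D ?F1Z ?F1N ?F10 ?F2D ?F2Z ?F2N ?F20 ?KqDl ?KqZ ?KqN ?Kq00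
  ?KqF1c ?KqF2c ?KqE1c ?KqE2c ?KqD ?EF11c ?EF22c ?EF12c ?EF21c ?SF12c ?SF21c.
Ltac numn := rewrite ?addr0 ?add0r ?subrr ?addrN ?n1 ?n2 ?n3.
Ltac ktac := rewrite /qint /Defs.kappa ?qpowB ?qpowN ?qpowD ?qpow2 ?qpow1 ?qpow0;
   rewrite ?(mulr0, mul0r, addr0, add0r, subr0, sub0r, oppr0, mulr1, mul1r, invr1, divr1, subrr, invrK); field; try (by rewrite ?qq_neq0 ?qq2_neq0).

Lemma C3F1 w : C3 r (F1 w) = F1 (C3 r w).
Proof. rewrite /C3. push. numn. wsolve K W ktac. Qed.

Lemma C1F1 w : C1 r (F1 w) = F1 (C1 r w).
Proof. rewrite /C1 /E3 /F3. push. numn. Time wsolve K W ktac. Qed.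

Lemma C1F2 w : C1 r (F2 w) = F2 (C1 r w).
Proof. rewrite /C1 /E3 /F3. push. numn. Time wsolve K W ktac. Qed.
Lemma C2F1 w : C2 r (F1 w) = F1 (C2 r w).
Proof. rewrite /C2 /E3 /F3. push. numn. Time wsolve K W ktac. Qed.
Lemma C2F2 w : C2 r (F2 w) = F2 (C2 r w).
Proof. rewrite /C2 /E3 /F3. push. numn. Time wsolve K W ktac. Qed.


Lemma C3F2 w : C3 r (F2 w) = F2 (C3 r w).
Proof. rewrite /C3. push. numn. wsolve K W ktac. Qed.
Lemma C1lin a u v : C1 r (a *: u + v) = a *: C1 r u + C1 r v.
Proof. rewrite /C1 /E3 /F3. push. wsolve K W ktac. Qed.
Lemma C2lin a u v : C2 r (a *: u + v) = a *: C2 r u + C2 r v.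
Proof. rewrite /C2 /E3 /F3. push. wsolve K W ktac. Qed.
Lemma C3lin a u v : C3 r (a *: u + v) = a *: C3 r u + C3 r v.
Proof. rewrite /C3. push. wsolve K W ktac. Qed.

Variables (v0 : W) (l1 l2 l3 : K).
Hypothesis hgen : forall w, gen r v0 w.
Hypotheses (hK1 : forall nu, Kq nu 0 0 v0 = qpow (nu * l1) *: v0)
  (hK2 : forall nu, Kq 0 nu 0 v0 = qpow (nu * l2) *: v0)
  (hK3 : forall nu, Kq 0 0 nu v0 = qpow (nu * l3) *: v0)
  (hE1 : E1 v0 = 0) (hE2 : E2 v0 = 0).

Lemma Kqv0 x1 x2 x3 : Kq x1 x2 x3 v0 = (qpow (x1 * l1) * qpow (x2 * l2) * qpow (x3 * l3)) *: v0.
Proof.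
have -> : Kq x1 x2 x3 v0 = Kq x1 0 0 (Kq 0 x2 0 (Kq 0 0 x3 v0)).
  by rewrite !KqD !addr0 !add0r.
rewrite hK3 !KqZ hK2 !KqZ hK1 !scalerA; congr (_ *: _); ring.
Qed.

Inductive Sp : W -> Prop :=
| S0 : Sp v0 | SF1 u : Sp u -> Sp (F1 u) | SF2 u : Sp u -> Sp (F2 u)
| SL a u v : Sp u -> Sp v -> Sp (a *: u + v).
Arguments SL a {u v}.

Lemma Spz : Sp 0. Proof. by have := SL (-1) S0 S0; rewrite scaleN1r addNr. Qed.
Lemma SZ a u : Sp u -> Sp (a *: u). Proof. by move=> h; have := SL a h Spz; rewrite addr0. Qed.
Arguments SZ a {u}.
Lemma SD u v : Sp u -> Sp v -> Sp (u + v). Proof. by move=> h h'; have := SL 1 h h'; rewrite scale1r. Qed.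
Lemma SN u : Sp u -> Sp (- u). Proof. by move=> h; have := SZ (-1) h; rewrite scaleN1r. Qed.
Lemma SK x1 x2 x3 u : Sp u -> Sp (Kq x1 x2 x3 u).
Proof.
elim=> [|{}u _ IH|{}u _ IH|a {}u v _ IHu _ IHv].
- by rewrite Kqv0; apply: SZ; apply: S0.
- by rewrite KqF1c; apply: SZ; apply: SF1.
- by rewrite KqF2c; apply: SZ; apply: SF2.
- by rewrite KqDl KqZ; apply: SL.
Qed.
Lemma SE1 u : Sp u -> Sp (E1 u).
Proof.
elim=> [|{}u hu IH|{}u _ IH|a {}u v _ IHu _ IHv].
- by rewrite hE1; apply: Spz.
- rewrite EF11c; apply: SD; first by apply: SF1.
  by apply: SZ; apply: SD; [apply: SK | apply: SN; apply: SK].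
- by rewrite EF12c; apply: SF2.
- by rewrite E1D E1Z; apply: SL.
Qed.
Lemma SE2 u : Sp u -> Sp (E2 u).
Proof.
elim=> [|{}u _ IH|{}u hu IH|a {}u v _ IHu _ IHv].
- by rewrite hE2; apply: Spz.
- by rewrite EF21c; apply: SF1.
- rewrite EF22c; apply: SD; first by apply: SF2.
  by apply: SZ; apply: SD; [apply: SK | apply: SN; apply: SK].
- by rewrite E2D E2Z; apply: SL.
Qed.
Lemma Sall w : Sp w.
Proof.
elim: (hgen w) => [|u _ IH|u _ IH|u _ IH|u _ IH|x1 x2 x3 u _ IH|a u v _ IHu _ IHv].
- exact: S0.
- exact: SE1.
- exact: SE2.
- exact: SF1.
- exact: SF2.
- exact: SK.
- exact: SL.
Qed.

Lemma scalar_on (f : W -> W) (c : K) : f v0 = c *: v0 ->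
  (forall u, f (F1 u) = F1 (f u)) -> (forall u, f (F2 u) = F2 (f u)) ->
  (forall a u v, f (a *: u + v) = a *: f u + f v) -> forall w, f w = c *: w.
Proof.
move=> h0 h1 h2 hl w; elim: (Sall w) => [|u _ IH|u _ IH|a u v _ IHu _ IHv].
- exact: h0.
- by rewrite h1 IH F1Z.
- by rewrite h2 IH F2Z.
- by rewrite hl IHu IHv scalerDr !scalerA mulrC.
Qed.

Lemma qpowM2 x : qpow (-2 * x) = (qpow x ^+ 2)^-1.
Proof. by rewrite mulNr qpowN -[2]/(1 + 1) mulrDl mul1r qpowD expr2. Qed.
Lemma qpowMN1 x : qpow (-1 * x) = (qpow x)^-1.
Proof. by rewrite mulN1r qpowN. Qed.

Ltac vtac := rewrite ?qpowM2 ?qpowMN1 ?mul0r ?mul1r ?qpowB ?qpowN ?qpowD ?qpow2 ?qpow1 ?qpow0;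
   field; try (by rewrite ?mulf_neq0 ?expf_neq0 ?qpow_neq0 ?qq_neq0).

Definition aa := qpow (-2 * (l1 + 1)).
Definition bb := qpow (-2 * l2).
Definition cc := qpow (-2 * (l3 - 1)).

Lemma Cv01 : C1 r v0 = (aa + bb + cc) *: v0.
Proof.
rewrite /C1 /E3 /F3 !Kqv0; push; rewrite ?hE1 ?hE2; push.
rewrite /aa /bb /cc; wsolve K W vtac.
Qed.
Lemma Cv02 : C2 r v0 = (- (aa * bb + bb * cc + cc * aa)) *: v0.
Proof.
rewrite /C2 /E3 /F3 !Kqv0; push; rewrite ?hE1 ?hE2; push.
rewrite /aa /bb /cc; wsolve K W vtac.
Qed.
Lemma Cv03 : C3 r v0 = (aa * bb * cc) *: v0.
Proof.
rewrite /C3 !Kqv0.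
rewrite /aa /bb /cc; wsolve K W vtac.
Qed.

Lemma main_conc :
  let a := qpow (-2 * (l1 + 1)) in
  let b := qpow (-2 * l2) in
  let c := qpow (-2 * (l3 - 1)) in
  let d := fun k : nat => qq ^+ (2 * k) + 1 + qq ^- (2 * k) in
  (exists c1 c2 c3 : K,
     (forall w, C1 r w = c1 *: w) /\ (forall w, C2 r w = c2 *: w) /\
     (forall w, C3 r w = c3 *: w) /\
     (1 - c1 *: 'X - c2 *: 'X^2 - c3 *: 'X^3 : {poly K})
       = (1 - a *: 'X) * (1 - b *: 'X) * (1 - c *: 'X)) /\
  (forall k : nat, (0 < k)%N -> forall w,
     Fk r k w = (a ^+ k + b ^+ k + c ^+ k) *: w) /\
  ((forall k : nat, (0 < k)%N -> d k != 0) ->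
   forall k : nat, (0 < k)%N -> forall w,
     (k%:R * d k)^-1 *: Fk r k w
       = (a ^+ k / (k%:R * d k) + b ^+ k / (k%:R * d k) + c ^+ k / (k%:R * d k)) *: w).
Proof.
move=> a b c d.
have hC1 : forall w, C1 r w = (aa + bb + cc) *: w := @scalar_on _ _ Cv01 C1F1 C1F2 C1lin.
have hC2 : forall w, C2 r w = (- (aa * bb + bb * cc + cc * aa)) *: w :=
  @scalar_on _ _ Cv02 C2F1 C2F2 C2lin.
have hC3 : forall w, C3 r w = (aa * bb * cc) *: w := @scalar_on _ _ Cv03 C3F1 C3F2 C3lin.
have hop : forall s w, opprod r s w =
   (\prod_(i <- s) cv K (aa + bb + cc) (- (aa * bb + bb * cc + cc * aa)) (aa * bb * cc) i) *: w.
  elim=> [|i s IH] w /=; first by rewrite big_nil scale1r.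
  rewrite big_cons IH /Cvec /cv; case: ifP => _; first by rewrite hC1 scalerA.
  by case: ifP => _; [rewrite hC2 scalerA | rewrite hC3 scalerA].
have P2 : forall k : nat, (0 < k)%N -> forall w,
     Fk r k w = (a ^+ k + b ^+ k + c ^+ k) *: w.
  move=> k hk w; rewrite /Fk /logcoef /powcoef.
  under eq_bigr => m _ do rewrite (eq_bigr _ (fun (s : m.-tuple 'I_3) _ => hop s w)) -scaler_suml scalerA.
  rewrite -scaler_suml scalerA.
  by rewrite (@logsum K (aa + bb + cc) (- (aa * bb + bb * cc + cc * aa)) (aa * bb * cc)
     aa bb cc erefl erefl erefl k hk).
split.
  exists (aa + bb + cc), (- (aa * bb + bb * cc + cc * aa)), (aa * bb * cc).
  split; first exact: hC1. split; first exact: hC2. split; first exact: hC3.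
  rewrite -!mul_polyC !polyCD !polyCN !polyCM /a /b /c /aa /bb /cc.
  ring.
split; first exact: P2.
move=> hd k hk w; rewrite P2 // scalerA; congr (_ *: _).
ring.
Qed.
End Main.

Theorem mainTheorem3 (K : numClosedFieldType) (ex : K -> K) (hbar : K)
  (ex0 : ex 0 = 1) (exD : forall a b, ex (a + b) = ex a * ex b)
  (hq2 : qq ex hbar ^+ 2 != 1)
  (W : lmodType K) (r : rep ex hbar W) (v0 : W) (l1 l2 l3 : K)
  (hgen : forall w, gen r v0 w)
  (hK1 : forall nu, Kq r nu 0 0 v0 = qpow ex hbar (nu * l1) *: v0)
  (hK2 : forall nu, Kq r 0 nu 0 v0 = qpow ex hbar (nu * l2) *: v0)
  (hK3 : forall nu, Kq r 0 0 nu v0 = qpow ex hbar (nu * l3) *: v0)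
  (hE1 : E1 r v0 = 0) (hE2 : E2 r v0 = 0) :
  let a := qpow ex hbar (-2 * (l1 + 1)) in
  let b := qpow ex hbar (-2 * l2) in
  let c := qpow ex hbar (-2 * (l3 - 1)) in
  let d := fun k : nat => qq ex hbar ^+ (2 * k) + 1 + qq ex hbar ^- (2 * k) in
  (exists c1 c2 c3 : K,
     (forall w, C1 r w = c1 *: w) /\ (forall w, C2 r w = c2 *: w) /\
     (forall w, C3 r w = c3 *: w) /\
     (1 - c1 *: 'X - c2 *: 'X^2 - c3 *: 'X^3 : {poly K})
       = (1 - a *: 'X) * (1 - b *: 'X) * (1 - c *: 'X)) /\
  (forall k : nat, (0 < k)%N -> forall w,
     Fk r k w = (a ^+ k + b ^+ k + c ^+ k) *: w) /\
  ((forall k : nat, (0 < k)%N -> d k != 0) ->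
   forall k : nat, (0 < k)%N -> forall w,
     (k%:R * d k)^-1 *: Fk r k w
       = (a ^+ k / (k%:R * d k) + b ^+ k / (k%:R * d k) + c ^+ k / (k%:R * d k)) *: w).
Proof. by apply: main_conc. Qed.
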